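(* Let $p\ge 1$ and let $G=(V,E)$ be a $p$-regular graph with a Hamiltonian cycle $(v_0,v_1,\dots,v_{n-1},v_0)$, $n=|V|\ge 3$. Let $G^*$ be the graph with vertex set $\{v_0,\dots,v_{n-1}\}\cup\{v_0',\dots,v_{n-1}'\}$ (the $v_i'$ new vertices) and edge set $E\cup\{\{v_i',v_j'\}\mid \{v_i,v_j\}\in E\}\cup\{\{v_i,v'_{(i+1)\bmod n}\}\mid i\in\{0,\dots,n-1\}\}$. Then $G^*$ is $(p+1)$-regular, $(v_{n-1},v_0',v_{n-1}',v_{n-2}',\dots,v_1',v_0,v_1,\dots,v_{n-2},v_{n-1})$ is a Hamiltonian cycle of $G^*$, and $G^*$ is 3-colorable if and only if $G$ is 3-colorable.
   Context: A graph $G=(V,E)$ is 3-colorable if there is a function $f\colon V\to\{1,2,3\}$ with $f(v)\neq f(w)$ for every edge $\{v,w\}\in E$. A graph is $k$-regular if every vertex has degree exactly $k$. A Hamiltonian cycle visits every vertex exactly once; the tuple $(u_0,\dots,u_{m-1},u_0)$ denotes the cycle with edges $\{u_i,u_{i+1 \bmod m}\}$. *)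

(* Defs.v *)
From mathcomp Require Import all_boot.
Set Implicit Arguments. Unset Strict Implicit. Unset Printing Implicit Defensive.

Section Graphs.
Variable T : finType.

Definition simple_graph (e : rel T) : Prop := symmetric e /\ irreflexive e.

Definition regular (k : nat) (e : rel T) : Prop :=
  forall x : T, #|[set y | e x y]| = k.

Definition three_colorable (e : rel T) : Prop :=
  exists f : T -> 'I_3, forall x y, e x y -> f x != f y.

Definition ham_cycle (e : rel T) (s : seq T) : Prop :=
  [/\ uniq s, forall x : T, x \in s & cycle e s].

(* The graph G^* built from G = (T, e) and the Hamiltonian cycle
   s = [:: v_0; ...; v_{n-1}].  Vertices: inl v = v, inr v = v'. *)
Definition star_rel (e : rel T) (s : seq T) : rel (T + T) :=
  fun a b =>
    match a, b with
    | inl x, inl y => e x y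
    | inr x, inr y => e x y
    | inl x, inr y =>
        [exists i : 'I_(size s),
           (x == tnth (in_tuple s) i) && (y == tnth (in_tuple s) (ordS i))]
    | inr y, inl x =>
        [exists i : 'I_(size s),
           (x == tnth (in_tuple s) i) && (y == tnth (in_tuple s) (ordS i))]
    end.

(* The cycle (v_{n-1}, v_0', v_{n-1}', v_{n-2}', ..., v_1', v_0, v_1, ..., v_{n-2})
   of G^* (closing back at v_{n-1}). *)
Definition star_cycle (s : seq T) : seq (T + T) :=
  match s with
  | [::] => [::]
  | x0 :: s' =>
      inl (last x0 s') :: inr x0 :: rev (map inr s') ++ map inl (belast x0 s')
  end.

End Graphs.

(* Main.v *)
Require Import Defs.
From mathcomp Require Import all_boot zify.
Set Implicit Arguments. Unset Strict Implicit. Unset Printing Implicit Defensive.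

Section Aux.
Variable T : finType.

Lemma tnth_next (s : seq T) : uniq s -> forall i : 'I_(size s),
  tnth (in_tuple s) (ordS i) = next s (tnth (in_tuple s) i).
Proof.
case: s => [|x0 s'] Us i; first by case: i.
rewrite next_nth mem_tnth !(tnth_nth x0).
have -> : tval (in_tuple (x0 :: s')) = x0 :: s' by [].
rewrite index_uniq // [nat_of_ord (ordS i)]/=.
have [lt|ge] := ltnP i.+1 (size s').+1.
  by rewrite modn_small //= (set_nth_default x0).
have ei : nat_of_ord i = size s'.
  by apply/eqP; rewrite eqn_leq -ltnS (ltn_ord i) -ltnS.
by rewrite ei modnn /= nth_default.
Qed.

Lemma star_lr e (s : seq T) x y : uniq s ->
  star_rel e s (inl x) (inr y) = (x \in s) && (y == next s x).
Proof.
move=> Us /=; apply/existsP/andP.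
  case=> i /andP[/eqP -> /eqP ->]; split; first exact: mem_tnth.
  by rewrite tnth_next.
case=> xs /eqP ->; case/(tnthP (in_tuple s)): xs => i ->; exists i.
by rewrite eqxx /= -tnth_next.
Qed.

Lemma star_rl e (s : seq T) x y : uniq s ->
  star_rel e s (inr y) (inl x) = (x \in s) && (y == next s x).
Proof. by move=> Us; rewrite -(star_lr e). Qed.

Lemma card_sumset (A : {set T + T}) :
  #|A| = #|[set x | inl x \in A]| + #|[set x | inr x \in A]|.
Proof.
have HA : A = inl @: [set x | inl x \in A] :|: inr @: [set x | inr x \in A].
  apply/setP; case=> x; rewrite in_setU.
    rewrite mem_imset; last by move=> ? ? [].
    rewrite inE; case: (inl x \in A) => //=.
    by case: imsetP => // -[? _].
  rewrite (mem_imset _ _ (f := inr)); last by move=> ? ? [].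
  rewrite inE; case: (inr x \in A); rewrite ?orbT //= orbF.
  by case: imsetP => // -[? _].
rewrite {1}HA cardsU !card_imset; try by move=> ? ? [].
have -> : inl @: [set x | inl x \in A] :&: inr @: [set x | inr x \in A] = set0.
  apply/setP => z; rewrite inE in_set0.
  by case: imsetP => // -[? _ ->]; case: imsetP => // -[? _].
by rewrite cards0 subn0.
Qed.

End Aux.

Theorem mainTheorem5 (T : finType) (e : rel T) (p : nat) (s : seq T) :
  simple_graph e -> 1 <= p -> regular p e ->
  3 <= #|T| -> ham_cycle e s ->
  [/\ regular p.+1 (star_rel e s),
      ham_cycle (star_rel e s) (star_cycle s)
    & three_colorable (star_rel e s) <-> three_colorable e].
Proof.
move=> [esym eirr] _ reg hT [Us covs cyc].
split.
- case=> x; rewrite card_sumset.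
    have -> : [set y : T | (inr y : T + T) \in [set y0 | star_rel e s (inl x) y0]] = [set next s x].
      apply/setP => y; rewrite !inE star_lr // covs //.
    have -> : [set y : T | (inl y : T + T) \in [set y0 | star_rel e s (inl x) y0]] = [set y | e x y].
      by apply/setP => y; rewrite !inE.
    by rewrite cards1 reg addn1.
  have -> : [set y : T | (inl y : T + T) \in [set y0 | star_rel e s (inr x) y0]] = [set prev s x].
    apply/setP => y; rewrite !inE star_rl // covs /=.
    by apply/eqP/eqP => [-> | ->]; rewrite ?prev_next ?next_prev.
  have -> : [set y : T | (inr y : T + T) \in [set y0 | star_rel e s (inr x) y0]] = [set y | e x y].
    by apply/setP => y; rewrite !inE.
  by rewrite cards1 reg add1n.
- have Hperm : perm_eq (star_cycle s) (map inl s ++ map inr s).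
    case: s {Us covs cyc} => [|x0 s'] //.
    apply/permP => P.
    have H : count P (map inl (x0 :: s')) = P (inl (last x0 s')) + count P (map inl (belast x0 s')).
      by rewrite lastI map_rcons -cats1 count_cat /= addn0 addnC.
    rewrite count_cat H /star_cycle /= count_cat count_rev; lia.
  split.
  + rewrite (perm_uniq Hperm) cat_uniq !map_inj_uniq ?Us //; try by move=> ? ? [].
    rewrite andbT /=; apply/hasP => [[z /mapP [? _ ->] /mapP [? _]]] //.
  + case=> x; rewrite (perm_mem Hperm) mem_cat.
      by rewrite (mem_map (f := inl)) ?covs //; move=> ? ? [].
    by rewrite (mem_map (f := inr)) ?covs ?orbT //; move=> ? ? [].
  + clear Hperm; case: s Us covs cyc => [|x0 s'] Us covs cyc; first by case/card_gt0P: (ltnW (ltnW hT)) => z _; have := covs z.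
    rewrite /star_cycle /= rcons_cat -map_rcons -lastI.
    have Hl : last x0 s' = prev (x0 :: s') x0.
      rewrite prev_nth mem_head memNindex; last by case/andP: Us.
      by rewrite -[size s']/((size (x0 :: s')).-1) nth_last.
    have cyc' : path e x0 (rcons s' x0) by [].
    apply/andP; split.
      rewrite -/(star_rel e (x0 :: s') (inl (last x0 s')) (inr x0)) star_lr //.
      by rewrite covs Hl (next_prev Us) eqxx.
    rewrite cat_path -map_rev path_map last_map.
    apply/andP; split.
      have : path e x0 (rcons (rev s') x0).
        have := rev_path e x0 (rcons s' x0).
        rewrite last_rcons belast_rcons rev_cons => ->.
        by rewrite (@eq_path _ _ e) // => a b; exact: esym.
      by rewrite rcons_path => /andP [H _].
    rewrite /= -/(star_rel e (x0 :: s') (inr _) (inl x0)) star_rl // mem_head /=.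
    rewrite path_map; apply/andP; split.
      by case: (s') => [|y t] /=; rewrite eqxx ?rev_cons ?last_rcons ?eqxx.
    by move: cyc'; rewrite rcons_path => /andP [].
- split.
    move=> [g Hg]; exists (fun x => g (inl x)) => x y exy; exact: Hg.
  move=> [f Hf].
  exists (fun a => match a with inl x => f x | inr x => f x end).
  case=> x; case=> y //=; try exact: Hf.
    rewrite -/(star_rel e s (inl x) (inr y)) star_lr // => /andP [xs /eqP ->].
    by apply: Hf; apply: next_cycle.
  rewrite -/(star_rel e s (inr x) (inl y)) star_rl // => /andP [ys /eqP ->].
  by rewrite eq_sym; apply: Hf; apply: next_cycle.
Qed.
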